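(* For every $n\ge 1$, no orientation $\overrightarrow{K_{1,n}}$ of the star $K_{1,n}$ is $\{2\}$-antimagic.
   Context: An oriented graph $\overrightarrow{G}$ is a directed graph obtained from a simple undirected graph by giving each edge one direction. For vertices $u,v$, $d(u,v)$ is the length of a shortest directed path from $u$ to $v$ ($d(u,u)=0$, and $d(u,v)=\infty$ if there is no such path). Let $\partial=\max\{d(u,v)<\infty : u,v\in V(\overrightarrow{G})\}$. A distance set is a nonempty $D\subseteq\{0,1,\dots,\partial\}$. The $D$-neighborhood of $u$ is $N_D(u)=\{v : d(u,v)\in D\}$. For a bijection $f:V(\overrightarrow{G})\to\{1,\dots,|V(\overrightarrow{G})|\}$, the $D$-weight of $u$ is $\omega_D(u)=\sum_{v\in N_D(u)} f(v)$ (empty sum $=0$). $\overrightarrow{G}$ is $D$-antimagic if $D\subseteq\{0,\dots,\partial\}$ and there is such a bijection $f$ with all $D$-weights pairwise distinct. *)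

(* Defs.v *)
From mathcomp Require Import all_boot.
Set Implicit Arguments. Unset Strict Implicit. Unset Printing Implicit Defensive.

Section Oriented.
Variable T : finType.
Variable arc : rel T.

Definition is_orientation_of (e : rel T) : Prop :=
  forall u v, (arc u v || arc v u) = e u v /\ ~~ (arc u v && arc v u).

Fixpoint walk (k : nat) (u v : T) : bool :=
  match k with
  | 0 => u == v
  | k'.+1 => [exists w, arc u w && walk k' w v]
  end.

Definition is_dist (u v : T) (k : nat) : bool :=
  walk k u v && [forall j : 'I_k, ~~ walk j u v].

(* k <= ∂, where ∂ = max of the finite distances *)
Definition le_diam (k : nat) : Prop :=
  exists u v m, is_dist u v m /\ k <= m.

Definition ND (D : seq nat) (u : T) : {set T} :=
  [set v | [exists i : 'I_(size D), is_dist u v (nth 0 D i)]].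

Definition is_labeling (f : T -> nat) : Prop :=
  injective f /\ forall x, 0 < f x <= #|T|.

Definition Dweight (D : seq nat) (f : T -> nat) (u : T) : nat :=
  \sum_(v in ND D u) f v.

Definition D_antimagic (D : seq nat) : Prop :=
  D != [::] /\ (forall k, k \in D -> le_diam k) /\
  exists f, is_labeling f /\ injective (Dweight D f).

End Oriented.

Definition star_edge (n : nat) : rel 'I_n.+1 :=
  fun u v => ((val u == 0) && (val v != 0)) || ((val v == 0) && (val u != 0)).
Arguments star_edge n : clear implicits.

(* Main.v *)
Require Import Defs.
From mathcomp Require Import all_boot.

Lemma weight0 (T : finType) (arc : rel T) (f : T -> nat) (u : T) :
  (forall w x, arc u w -> arc w x -> False) -> Dweight arc [:: 2] f u = 0.
Proof.
move=> H; rewrite /Dweight.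
have -> : ND arc [:: 2] u = set0.
  apply/setP=> v; rewrite !inE; apply/negbTE/negP; case/existsP => i.
  rewrite /is_dist => /andP [Hw _].
  have Hi : nth 0 [:: 2] i = 2 by case: (i) => [[|[|]]].
  move: Hw; rewrite Hi /= => /existsP [w /andP [Huw /existsP [x /andP [Hwx _]]]].
  exact: (H w x Huw Hwx).
by rewrite big_set0.
Qed.

Theorem mainTheorem3 (n : nat) (hn : 1 <= n) (arc : rel 'I_n.+1)
  (Hor : is_orientation_of arc (star_edge n)) :
  ~ D_antimagic arc [:: 2].
Proof.
move=> [_ [_ [f [_ Hinj]]]].
set c : 'I_n.+1 := ord0.
have Hedge : forall u v, arc u v -> star_edge n u v.
  by move=> u v H; case: (Hor u v) => <- _; rewrite H.
have Hanti : forall u v, arc u v -> arc v u -> False.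
  by move=> u v H1 H2; case: (Hor u v) => _; rewrite H1 H2.
have Hleaf : forall u v, val u != 0 -> arc u v -> v = c.
  move=> u v Hu H; move: (Hedge u v H); rewrite /star_edge (negbTE Hu) /=.
  by move=> /andP [/eqP Hv _]; apply: val_inj.
have Hcv : forall v, arc c v -> val v != 0.
  move=> v H; move: (Hedge c v H); rewrite /star_edge /=.
  by rewrite andbF orbF.
have Hout : forall v, arc c v -> Dweight arc [:: 2] f v = 0.
  move=> v H; apply: weight0 => w x Hvw _.
  have := Hleaf v w (Hcv v H) Hvw => Ew; subst w.
  exact: (Hanti _ _ H Hvw).
have Hc : Dweight arc [:: 2] f c = 0.
  apply: weight0 => w x Hcw Hwx.
  have := Hleaf w x (Hcv w Hcw) Hwx => Ex; subst x.
  exact: (Hanti _ _ Hcw Hwx).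
have Hne : forall v : 'I_n.+1, val v != 0 -> v <> c.
  by move=> v Hv E; rewrite E in Hv.
case: (boolP [exists v, arc c v]).
  move=> /existsP [v Hv].
  apply: (Hne v (Hcv v Hv)); apply: Hinj; by rewrite Hc Hout.
move=> Hno.
have Hno' : forall v, arc c v = false.
  by move=> v; apply/negP => H; move/negP: Hno; apply; apply/existsP; exists v.
pose l : 'I_n.+1 := Ordinal (hn : 1 < n.+1).
have Hl : val l != 0 by [].
apply: (Hne l Hl); apply: Hinj; rewrite Hc; apply: weight0 => w x Hlw Hwx.
have := Hleaf l w Hl Hlw => Ew; subst w.
by rewrite Hno' in Hwx.
Qed.
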